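(* Let $\mathcal{A}$ be a unital $\mathbb{F}$-algebra of dimension $n\ge2$ and let $S$ be a generating set of $\mathcal{A}$ with $l(S)\ge2$. Let $M=(m_0,\ldots,m_{n-1})$ be the characteristic sequence of $S$, and let $k_1$ be the index with $m_{k_1}=1$ and $m_{k_1+1}>1$. Then there exist a basis $\{e_0,\ldots,e_{n-1}\}$ of $\mathcal{A}$ and functions $t_1,t_2:\{k_1+1,\ldots,n-1\}\to\{1,\ldots,n-1\}$ such that: (1) for every $i\in\{0,\ldots,n-1\}$, $e_i$ is a word in $S$ of length $m_i$; (2a) for every $k$ with $k_1<k<n$, $m_{t_1(k)}+m_{t_2(k)}=m_k$ and $t_1(k),t_2(k)<k$; (2b) for all $h_1,h_2$ with $k_1<h_1<h_2<n$, at least one of $t_1(h_1)<t_1(h_2)$ or $t_2(h_1)<t_2(h_2)$ holds; (3) for every $k$ with $k_1<k<n$, $e_{t_1(k)}e_{t_2(k)}=e_k$; (4) $L_1(S)=\langle e_0,\ldots,e_{k_1}\rangle$.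
   Context: Algebras are finite-dimensional, unital, not necessarily associative, over a field $\mathbb{F}$. For a finite generating set $S$ of $\mathcal{A}$, a word in $S$ is any product (with any bracketing) of finitely many elements of $S$; its length is the number of factors, and $1$ is a word of length $0$. $L_i(S)$ is the linear span of all words in $S$ of length at most $i$ (so $L_0(S)=\mathbb{F}$); $l(S)=\min\{k\ge0: L_k(S)=\mathcal{A}\}$. The characteristic sequence of $S$ is the non-decreasing sequence $(m_0,\ldots,m_{n-1})$ constructed as follows: $m_0=0$; with $s_1=\dim L_1(S)-1$, set $m_1=\cdots=m_{s_1}=1$; inductively, if $m_1,\ldots,m_r$ are defined using $L_1(S),\ldots,L_{k-1}(S)$, put $s_k=\dim L_k(S)-\dim L_{k-1}(S)$ and set $m_{r+1}=\cdots=m_{r+s_k}=k$. (The sequence has $n=\dim\mathcal{A}$ terms.) $\langle\cdot\rangle$ denotes linear span. *)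

(* Defs.v *)
(* A finite-dimensional, unital, not necessarily associative
   F-algebra is modelled as a finite-dimensional F-vector space A : vectType F
   together with a bilinear multiplication [mul] and a two-sided unit [one]. *)
From HB Require Import structures.
From mathcomp Require Import all_boot all_order all_algebra.
Set Implicit Arguments. Unset Strict Implicit. Unset Printing Implicit Defensive.
Import GRing.Theory.
Local Open Scope ring_scope.

Section Words.
Variables (F : fieldType) (A : vectType F) (mul : A -> A -> A) (one : A).
Variable S : seq A.

(* [wordsF f i] : the (multi)list of all words in S of length i (all
   bracketings), computed with fuel f (correct whenever i < f).
   The word of length 0 is [one]. *)
Fixpoint wordsF (f i : nat) : seq A :=
  match f with
  | 0 => [::]
  | f'.+1 =>
    if i == 0%N then [:: one]
    else if i == 1%N then S
    else flatten [seq allpairs mul (wordsF f' j) (wordsF f' (i - j))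
                 | j <- iota 1 i.-1]
  end.

Definition words (i : nat) : seq A := wordsF i.+1 i.

Definition Lspan (i : nat) : {vspace A} :=
  (<< flatten [seq words j | j <- iota 0 i.+1] >>)%VS.

Definition is_length (l : nat) : Prop :=
  Lspan l = fullv /\ forall k, (k < l)%N -> Lspan k <> fullv.

(* characteristic sequence of S, given l = l(S), built literally:
   m_0 = 0, then s_k := dim L_k - dim L_{k-1} copies of k, k = 1..l
   (note s_1 = dim L_1 - 1 = dim L_1 - dim L_0). *)
Definition charseq (l : nat) : seq nat :=
  0%N :: flatten [seq nseq (\dim (Lspan k) - \dim (Lspan k.-1)) k
                 | k <- iota 1 l].
End Words.

(* Main.v *)
Require Import Defs.
From HB Require Import structures.
From mathcomp Require Import all_boot all_order all_algebra zify.
Import GRing.Theory.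
Local Open Scope ring_scope.

Section Proof.
Variables (F : fieldType) (A : vectType F) (mul : A -> A -> A) (one : A).
Hypotheses (mul_linl : forall y : A, linear (fun x => mul x y))
  (mul_linr : forall x : A, linear (mul x))
  (mul1x : forall x, mul one x = x) (mulx1 : forall x, mul x one = x).
Variable S : seq A.
Local Open Scope nat_scope.

Local Notation words := (words mul one S).
Local Notation wordsF := (wordsF mul one S).
Local Notation Lspan := (Lspan mul one S).

Lemma mul0l y : mul 0%R y = 0%R.
Proof.
have := mul_linl y 1%R 0%R 0%R; rewrite !scale1r !addr0 => h.
by have := congr1 (fun z => z - mul 0 y)%R h; rewrite addrK subrr => /esym.
Qed.

Lemma mulDl u v y : (mul (u + v) y = mul u y + mul v y)%R.
Proof. by have := mul_linl y 1%R u v; rewrite !scale1r. Qed.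

Lemma mulZl a u y : (mul (a *: u) y = a *: mul u y)%R.
Proof. by have := mul_linl y a u 0%R; rewrite !addr0 mul0l addr0. Qed.

Lemma mul0r x : mul x 0%R = 0%R.
Proof.
have := mul_linr x 1%R 0%R 0%R; rewrite !scale1r !addr0 => h.
by have := congr1 (fun z => z - mul x 0)%R h; rewrite addrK subrr => /esym.
Qed.

Lemma mulDr x u v : (mul x (u + v) = mul x u + mul x v)%R.
Proof. by have := mul_linr x 1%R u v; rewrite !scale1r. Qed.

Lemma mulZr x a u : (mul x (a *: u) = a *: mul x u)%R.
Proof. by have := mul_linr x a u 0%R; rewrite !addr0 mul0r addr0. Qed.

Lemma mulspan_l (X : seq A) u w (U : {vspace A}) : (u \in <<X>>)%VS ->
  (forall x, x \in X -> mul x w \in U) -> mul u w \in U.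
Proof.
move=> /(@coord_span _ _ _ (in_tuple X)) -> H.
rewrite (big_morph (fun x => mul x w) (fun a b => mulDl a b w) (mul0l w)).
apply: memv_suml => i _; rewrite mulZl memvZ // H // mem_nth //.
Qed.

Lemma mulspan_r (X : seq A) u w (U : {vspace A}) : (w \in <<X>>)%VS ->
  (forall x, x \in X -> mul u x \in U) -> mul u w \in U.
Proof.
move=> /(@coord_span _ _ _ (in_tuple X)) -> H.
rewrite (big_morph (mul u) (fun a b => mulDr u a b) (mul0r u)).
apply: memv_suml => i _; rewrite mulZr memvZ // H // mem_nth //.
Qed.

Lemma mulspan (X Y : seq A) u w (U : {vspace A}) : (u \in <<X>>)%VS ->
  (w \in <<Y>>)%VS ->
  (forall x y, x \in X -> y \in Y -> mul x y \in U) -> mul u w \in U.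
Proof.
move=> hu hw H; apply: (@mulspan_l X u w U hu) => x hx; apply: (@mulspan_r Y x w U hw) => y hy.
exact: H.
Qed.

Lemma wordsF_eq f f' i : (i < f)%N -> (i < f')%N -> wordsF f i = wordsF f' i.
Proof.
elim: f f' i => [|f IH] [|f'] i //= hi hi'.
case: ifP => // /eqP i0; case: ifP => // /eqP i1.
congr flatten; apply/eq_in_map => j; rewrite mem_iota => /andP[j1 j2].
rewrite (IH f' j); try lia. rewrite (IH f' (i - j)) //; lia.
Qed.

Lemma words_mul p q u w : (0 < p)%N -> (0 < q)%N -> u \in words p ->
  w \in words q -> mul u w \in words (p + q).
Proof.
move=> p0 q0 hu hw; rewrite /Defs.words /=.
rewrite ifF; last by apply/eqP; lia.
rewrite ifF; last by apply/eqP; lia.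
apply/flattenP; exists (allpairs mul (wordsF (p + q) p) (wordsF (p + q) (p + q - p))).
  by apply: map_f; rewrite mem_iota; apply/andP; split; lia.
rewrite addKn (@wordsF_eq (p + q) p.+1) ?(@wordsF_eq (p + q) q.+1); try lia.
exact: allpairs_f.
Qed.

Lemma wordsF_unfold i : 1 < i -> wordsF i.+1 i =
  flatten [seq allpairs mul (wordsF i j) (wordsF i (i - j)) | j <- iota 1 i.-1].
Proof.
move=> i1 /=; rewrite ifF; last by apply/eqP; lia.
by rewrite ifF //; apply/eqP; lia.
Qed.

Lemma words_split j w : (1 < j)%N -> w \in words j ->
  exists p u u', [/\ (0 < p < j)%N, u \in words p, u' \in words (j - p) & w = mul u u'].
Proof.
move=> j1; rewrite /Defs.words wordsF_unfold //.
move=> /flattenP[s /mapP[p hp ->]] /allpairsP[[u u'] [hu hu' ->]]; simpl in hu, hu'.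
move: hp; rewrite mem_iota => /andP[p1 p2].
exists p, u, u'; split => //; first by apply/andP; split; lia.
  by rewrite -(@wordsF_eq j p.+1) //; lia.
by rewrite -(@wordsF_eq j (j - p).+1) //; lia.
Qed.

Lemma mem_Lspan i j w : (i <= j)%N -> w \in words i -> (w \in Lspan j)%VS.
Proof.
move=> ij hw; apply: memv_span; apply/flattenP; exists (words i) => //.
by apply: map_f; rewrite mem_iota; apply/andP; split; lia.
Qed.

Lemma Lspan_sub j (U : {vspace A}) :
  (forall i w, (i <= j)%N -> w \in words i -> w \in U) -> (Lspan j <= U)%VS.
Proof.
move=> H; apply/span_subvP => w /flattenP[s /mapP[i hi ->]] hw.
by apply: (H i) => //; move: hi; rewrite mem_iota; lia.
Qed.

Lemma Lspan_mono i j : (i <= j)%N -> (Lspan i <= Lspan j)%VS.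
Proof.
move=> ij; apply: Lspan_sub => k w kj; apply: mem_Lspan; lia.
Qed.

Lemma greedy (T : Type) (f : T -> A) (C : seq T) (B : seq A) : free B ->
  exists bm, free (B ++ map f (mask bm C)) /\
    span (B ++ map f (mask bm C)) = span (B ++ map f C).
Proof.
elim: C B => [|c C IH] B fB.
  by exists [::]; rewrite /= cats0.
case: (boolP (f c \in <<B>>)%VS) => hc.
  have [bm [h1 h2]] := IH B fB; exists (false :: bm); split => //=.
  have e : (<<B>> + <[f c]> = <<B>>)%VS by apply/addv_idPl; rewrite -memvE.
  by rewrite h2 !span_cat span_cons addvA e.
have fB' : free (B ++ [:: f c]).
  by rewrite (perm_free (permEl (perm_catC _ _))) /= free_cons hc.
have [bm [h1 h2]] := IH _ fB'; exists (true :: bm); split => /=.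
  by rewrite -cat_rcons -cats1.
by rewrite -cat_rcons -cats1 h2 -catA.
Qed.


Arguments mem_Lspan {i j w}. Arguments Lspan_mono {i j}. Arguments words_mul {p q u w}.
Arguments words_split {j w}. Arguments mulspan {X Y u w U}.

Definition entry := (A * nat * (nat * nat))%type.
Definition ev (x : entry) : A := x.1.1.
Definition em (x : entry) : nat := x.1.2.
Definition et1 (x : entry) : nat := x.2.1.
Definition et2 (x : entry) : nat := x.2.2.
Definition d0 : entry := (0%R, 0, (0, 0)).
Definition mE (E : seq entry) i := em (nth d0 E i).
Definition vE (E : seq entry) i := ev (nth d0 E i).
Definition t1E (E : seq entry) i := et1 (nth d0 E i).
Definition t2E (E : seq entry) i := et2 (nth d0 E i).
Definition pre j := 0 :: flatten [seq nseq (\dim (Lspan k) - \dim (Lspan k.-1)) k | k <- iota 1 j].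

Record Inv j (E : seq entry) : Prop := {
 Ifree : free (map ev E);
 Ispan : forall p, p <= j -> span (map ev (filter (fun x => em x <= p) E)) = Lspan p;
 Ipre : map em E = pre j;
 Iword : forall x, x \in E -> ev x \in words (em x);
 Iprod : forall i, i < size E -> 1 < mE E i ->
   [/\ t1E E i < i, t2E E i < i, 0 < mE E (t1E E i), 0 < mE E (t2E E i)
     & mE E (t1E E i) + mE E (t2E E i) = mE E i] /\
   vE E i = mul (vE E (t1E E i)) (vE E (t2E E i));
 Ilex : forall i1 i2, i1 < i2 < size E -> 1 < mE E i1 ->
   t1E E i1 < t1E E i2 \/ t2E E i1 < t2E E i2;
 Imono : forall a b, a <= b < size E -> mE E a <= mE E b;
 Ile : forall x, x \in E -> em x <= j }.
Arguments Ifree {j E}. Arguments Ispan {j E}. Arguments Ipre {j E}. Arguments Iword {j E}.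
Arguments Iprod {j E}. Arguments Ilex {j E}. Arguments Imono {j E}. Arguments Ile {j E}.

Lemma pre_succ j : 0 < j ->
  pre j = pre j.-1 ++ nseq (\dim (Lspan j) - \dim (Lspan j.-1)) j.
Proof.
case: j => // j _.
have e : iota 1 j.+1 = iota 1 j ++ [:: j.+1] by rewrite -[j.+1]addn1 iotaD add1n addn1.
by rewrite /pre e map_cat flatten_cat /= cats0.
Qed.

Lemma map_const_in (X : seq entry) j : (forall x, x \in X -> em x = j) ->
  map em X = nseq (size X) j.
Proof.
elim: X => //= x X IH H; rewrite H ?mem_head // IH // => y hy.
by apply: H; rewrite inE hy orbT.
Qed.

Lemma memX (X : seq entry) i : i < size X -> nth d0 X i \in X.
Proof. exact: mem_nth. Qed.

Lemma append j (E X : seq entry) : 0 < j -> Inv j.-1 E ->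
 (forall x, x \in X -> em x = j) ->
 free (map ev (E ++ X)) -> span (map ev (E ++ X)) = Lspan j ->
 (forall x, x \in X -> ev x \in words j) ->
 (1 < j -> forall x, x \in X ->
    [/\ et1 x < size E, et2 x < size E, 0 < mE E (et1 x), 0 < mE E (et2 x)
      & mE E (et1 x) + mE E (et2 x) = j] /\
    ev x = mul (vE E (et1 x)) (vE E (et2 x))) ->
 (1 < j -> forall r1 r2, r1 < r2 < size X ->
    et1 (nth d0 X r1) < et1 (nth d0 X r2) \/ et2 (nth d0 X r1) < et2 (nth d0 X r2)) ->
 Inv j (E ++ X).
Proof.
move=> j0 [fE spE preE wE prE lexE monE leE] hm hf hs hw hp hl.
have filE : filter (fun x => em x <= j.-1) E = E.
  by apply/all_filterP/allP => x /leE.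
have dimE : \dim (Lspan j.-1) = size E.
  by rewrite -(spE j.-1) // filE; move/eqP: fE; rewrite size_map.
have dimEX : \dim (Lspan j) = size E + size X.
  by rewrite -hs; move/eqP: hf; rewrite size_map size_cat.
have mleq : forall i, i < size (E ++ X) -> mE (E ++ X) i <= j.
  move=> i hi; rewrite /mE; have := @memX _ _ hi; rewrite mem_cat.
  by case/orP => [/leE h | /hm ->] //; exact: leq_trans h (leq_pred j).
have nthL : forall i, i < size E -> nth d0 (E ++ X) i = nth d0 E i.
  by move=> i hi; rewrite nth_cat hi.
have nthR : forall i, size E <= i -> nth d0 (E ++ X) i = nth d0 X (i - size E).
  by move=> i hi; rewrite nth_cat ltnNge hi.
split.
- exact: hf.
- move=> p hp'; case: (ltnP p j) => pj.
    rewrite filter_cat (@eq_in_filter _ _ pred0 X) ?filter_pred0 ?cats0.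
      by apply: spE; lia.
    by move=> x /hm /= ->; apply/negbTE; rewrite -ltnNge.
  have -> : p = j by lia.
  have -> : filter (fun x => em x <= j) (E ++ X) = E ++ X.
    apply/all_filterP; rewrite all_cat; apply/andP; split; apply/allP => x /=.
      by move/leE; lia.
    by move/hm ->.
  exact: hs.
- by rewrite map_cat preE (@map_const_in X j hm) (@pre_succ j j0) dimE dimEX addKn.
- move=> x; rewrite mem_cat => /orP[/wE // | hx]; rewrite hm //; exact: hw.
- move=> i hi mi; case: (ltnP i (size E)) => hiE.
    rewrite /mE /vE /t1E /t2E (nthL i) // in mi *.
    have [[h1 h2 h3 h4 h5] h6] := prE i hiE mi.
    rewrite /mE /vE /t1E /t2E in h1 h2 h3 h4 h5 h6.
    rewrite (nthL (et1 (nth d0 E i))); last by lia.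
    rewrite (nthL (et2 (nth d0 E i))); last by lia.
    by split.
  have hx : nth d0 X (i - size E) \in X.
    by apply: memX; rewrite size_cat in hi; lia.
  rewrite /mE /vE /t1E /t2E (nthR i) // in mi *.
  rewrite hm // in mi *.
  have [[h1 h2 h3 h4 h5] h6] := hp mi _ hx.
  rewrite (nthL (et1 (nth d0 X (i - size E)))) //.
  rewrite (nthL (et2 (nth d0 X (i - size E)))) //.
  split => //; split => //; lia.
- move=> i1 i2 /andP[i12 i2s] mi1.
  rewrite size_cat in i2s.
  case: (ltnP i2 (size E)) => h2.
    have := lexE i1 i2; rewrite /mE /t1E /t2E !nthL // in mi1 *; last by lia.
    by apply => //; apply/andP.
  case: (ltnP i1 (size E)) => h1.
    have hx : nth d0 X (i2 - size E) \in X by apply: memX; lia.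
    have mi1' := leE _ (@memX E i1 h1).
    rewrite /mE (nthL i1) // in mi1.
    have j1 : 1 < j by lia.
    have [[a1 a2 a3 a4 a5] _] := hp j1 _ hx.
    have [[b1 b2 b3 b4 b5] _] := prE i1 h1 mi1.
    rewrite /t1E /t2E (nthL i1) // (nthR i2) //.
    rewrite /mE /t1E /t2E in a3 a4 a5 b1 b2 b3 b4 b5.
    case: (ltnP (et1 (nth d0 E i1)) (et1 (nth d0 X (i2 - size E)))) => c1; first by left.
    case: (ltnP (et2 (nth d0 E i1)) (et2 (nth d0 X (i2 - size E)))) => c2; first by right.
    have m1 : mE E (et1 (nth d0 X (i2 - size E))) <= mE E (et1 (nth d0 E i1)).
      by apply: monE; rewrite c1 /=; lia.
    have m2 : mE E (et2 (nth d0 X (i2 - size E))) <= mE E (et2 (nth d0 E i1)).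
      by apply: monE; rewrite c2 /=; lia.
    rewrite /mE in m1 m2; exfalso; lia.
  have hx1 : nth d0 X (i1 - size E) \in X by apply: memX; lia.
  rewrite /mE (nthR i1) // hm // in mi1.
  rewrite /t1E /t2E (nthR i1) // (nthR i2) //.
  by apply: hl => //; apply/andP; split; lia.
- move=> a b /andP[ab bs]; case: (ltnP b (size E)) => hb.
    by rewrite /mE !nthL //; [apply: monE; apply/andP | lia].
  have hx : nth d0 X (b - size E) \in X by apply: memX; rewrite size_cat in bs; lia.
  rewrite {2}/mE (nthR b) // hm //; apply: mleq; lia.
- move=> x; rewrite mem_cat => /orP[/leE | /hm ->] //; lia.
Qed.

Lemma Lspan0 : Lspan 0 = span [:: one].
Proof. by []. Qed.

Lemma Lspan1 : Lspan 1 = span (one :: S).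
Proof. by rewrite /Defs.Lspan /= cats0. Qed.

Lemma words1 : words 1 = S.
Proof. by []. Qed.

Lemma words0 : words 0 = [:: one].
Proof. by []. Qed.

Lemma base : one != 0%R -> Inv 0 [:: (one, 0, (0, 0))].
Proof.
move=> h; split.
- by rewrite /= free_cons span_nil memv0 h nil_free.
- by move=> p; rewrite leqn0 => /eqP ->.
- by [].
- by move=> x; rewrite inE => /eqP ->; rewrite words0 mem_head.
- by move=> [|i].
- by move=> i1 i2 /andP[a b]; exfalso; move: b; rewrite /=; lia.
- move=> a b /andP[ab]; rewrite /= => b1; have -> : a = 0 by lia.
  by have -> : b = 0 by lia.
- by move=> x; rewrite inE => /eqP ->.
Qed.

Lemma span_full j E : Inv j E -> span (map ev E) = Lspan j.
Proof.
move=> I; rewrite -(Ispan I j (leqnn j)); congr span; congr map.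
by apply/esym/all_filterP/allP => x /(Ile I).
Qed.

Arguments span_full {j E}.

Lemma stepS E : Inv 0 E -> exists X, Inv 1 (E ++ X).
Proof.
move=> I.
have [bm [h1 h2]] := @greedy A id S (map ev E) (Ifree I).
rewrite map_id in h1 h2.
pose X := map (fun s => (s, 1, (0, 0))) (mask bm S).
have eX : map ev X = mask bm S by rewrite /X; elim: (mask bm S) => //= a t ->.
exists X; apply: (@append 1 E X) => //.
- by move=> x /mapP[s _ ->].
- by rewrite map_cat eX.
- rewrite map_cat eX h2 span_cat (span_full I) Lspan0 Lspan1 span_cons.
  by rewrite span_nil addv0 map_id span_cons.
- by move=> x /mapP[s /mem_mask hs ->]; rewrite words1.
Qed.

Lemma divmod_lt N c1 c2 : c1 < c2 -> c1 %/ N < c2 %/ N \/ c1 %% N < c2 %% N.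
Proof.
move=> lt; case: (ltnP (c1 %/ N) (c2 %/ N)) => h; [by left | right].
have e : c1 %/ N = c2 %/ N by apply/eqP; rewrite eqn_leq h leq_div2r // ltnW.
move: (divn_eq c1 N) (divn_eq c2 N); rewrite e; lia.
Qed.

Lemma ar1 a b p j : p < j -> j <= a + b -> a <= p -> b <= j - p -> a + b = j.
Proof. lia. Qed.

Lemma ar2 a b N : a < N -> b < N -> a * N + b < N * N.
Proof. nia. Qed.

Lemma stepP j E : 1 < j -> Inv j.-1 E -> exists X, Inv j (E ++ X).
Proof.
move=> j1 I.
pose N := size E.
pose P c := (0 < mE E (c %/ N)) && (0 < mE E (c %% N)) &&
            (mE E (c %/ N) + mE E (c %% N) == j).
pose C := filter P (iota 0 (N * N)).
pose f c := mul (vE E (c %/ N)) (vE E (c %% N)).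
have [bm [h1 h2]] := @greedy nat f C (map ev E) (Ifree I).
pose X := map (fun c => (f c, j, (c %/ N, c %% N))) (mask bm C).
have eX : map ev X = map f (mask bm C) by rewrite /X -map_comp.
have memC c : c \in C -> [/\ P c, c %/ N < N & c %% N < N].
  rewrite mem_filter mem_iota => /andP[pc hc]; have N0 : 0 < N by nia.
  by split => //; [rewrite ltn_divLR | rewrite ltn_pmod].
have fw c : c \in C -> f c \in words j.
  move=> /memC[/andP[/andP[a b] /eqP e] hl hr].
  rewrite -e; apply: words_mul => //; apply: (Iword I); exact: memX.
have spE := span_full I.
pose V := span (map ev E ++ map f C).
have inE_ w : w \in span (map ev E) -> w \in V.
  by rewrite /V span_cat; apply: (subvP (addvSl _ _)).
have inC w : w \in map f C -> w \in V.
  by move=> hw; apply: memv_span; rewrite mem_cat hw orbT.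
have HV : V = Lspan j.
  apply/eqP; rewrite eqEsubv; apply/andP; split.
    apply/span_subvP => w; rewrite mem_cat => /orP[hw | /mapP[c hc ->]].
      apply: (subvP (Lspan_mono (leq_pred j)) w); rewrite -spE; exact: memv_span.
    exact: (mem_Lspan (leqnn j) (fw c hc)).
  apply: Lspan_sub => i w ij hw.
  case: (ltnP i j) => ij'.
    by apply: inE_; rewrite spE; apply: (mem_Lspan _ hw); rewrite -ltnS (ltn_predK ij').
  have eij : i = j by lia.
  subst i.
  have [p [u [u' [/andP[p0 pj] hu hu' ->]]]] := words_split j1 hw.
  have hu1 : u \in Lspan p by apply: (mem_Lspan (leqnn p) hu).
  have hu2 : u' \in Lspan (j - p) by apply: (mem_Lspan (leqnn _) hu').
  rewrite -(Ispan I p) in hu1; last by lia.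
  rewrite -(Ispan I (j - p)) in hu2; last by lia.
  apply: (mulspan hu1 hu2) => x y /mapP[ex hex ->] /mapP[ey hey ->].
  move: hex hey; rewrite !mem_filter => /andP[mx hex] /andP[my hey].
  have wx := Iword I _ hex; have wy := Iword I _ hey.
  case: (posnP (em ex)) => ex0.
    rewrite ex0 words0 inE in wx; rewrite (eqP wx) mul1x.
    by apply: inE_; apply: memv_span; apply: map_f.
  case: (posnP (em ey)) => ey0.
    rewrite ey0 words0 inE in wy; rewrite (eqP wy) mulx1.
    by apply: inE_; apply: memv_span; apply: map_f.
  have wxy := words_mul ex0 ey0 wx wy.
  case: (ltnP (em ex + em ey) j) => sj.
    by apply: inE_; rewrite spE; apply: (mem_Lspan _ wxy); rewrite -ltnS (ltn_predK sj).
  pose a := index ex E; pose b := index ey E.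
  have ha : a < N by rewrite index_mem.
  have hb : b < N by rewrite index_mem.
  have eA : nth d0 E a = ex by rewrite nth_index.
  have eB : nth d0 E b = ey by rewrite nth_index.
  have dv : (a * N + b) %/ N = a.
    have N0 : 0 < N := leq_ltn_trans (leq0n a) ha.
    by rewrite divnMDl // divn_small // addn0.
  have md : (a * N + b) %% N = b by rewrite modnMDl modn_small.
  apply: inC; apply/mapP; exists (a * N + b).
    rewrite mem_filter mem_iota /P dv md /mE eA eB ex0 ey0 /=.
    apply/andP; split; first by apply/eqP; apply: ar1 pj sj mx my.
    exact: ar2.
  by rewrite /f dv md /vE eA eB.
exists X; apply: (@append j E X) => //.
- by lia.
- by move=> x /mapP[c _ ->].
- by rewrite map_cat eX h1.
- by rewrite map_cat eX h2.
- by move=> x /mapP[c /mem_mask /fw hc ->].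
- move=> _ x /mapP[c /mem_mask hc ->].
  have [/andP[/andP[a b] /eqP e] hl hr] := memC c hc.
  by split.
- move=> _ r1 r2 /andP[r12 r2s].
  rewrite size_map in r2s.
  rewrite /X !(nth_map 0) /=; try lia.
  apply: divmod_lt.
  have so : sorted ltn (mask bm C).
    apply: sorted_mask; first exact: ltn_trans.
    apply: sorted_filter; first exact: ltn_trans.
    exact: iota_ltn_sorted.
  apply: (sorted_ltn_nth ltn_trans 0 so) => //; rewrite inE.
  exact: ltn_trans r12 r2s.
Qed.

Lemma allInv (h1 : one != 0%R) j : exists E, Inv j E.
Proof.
elim: j => [|j [E I]]; first by exists [:: (one, 0, (0, 0))]; exact: base.
case: j I => [|j] I.
  by have [X I'] := stepS E I; exists (E ++ X).
by have [X I'] := @stepP j.+2 E erefl I; exists (E ++ X).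
Qed.

Lemma main_sec l k1 :
  let n := \dim (fullv : {vspace A}) in
  let M := charseq mul one S l in
  (2 <= n)%N ->
  is_length mul one S l -> (2 <= l)%N ->
  nth 0%N M k1 = 1%N -> (1 < nth 0%N M k1.+1)%N ->
  exists (e : nat -> A) (t1 t2 : nat -> nat),
    basis_of fullv (mkseq e n) /\
    [/\ (forall i, (i < n)%N -> e i \in Defs.words mul one S (nth 0%N M i)),
        (forall k, (k1 < k < n)%N ->
           [/\ (1 <= t1 k <= n.-1)%N, (1 <= t2 k <= n.-1)%N,
               (nth 0%N M (t1 k) + nth 0%N M (t2 k) = nth 0%N M k)%N,
               (t1 k < k)%N & (t2 k < k)%N]),
        (forall h1 h2, (k1 < h1)%N -> (h1 < h2)%N -> (h2 < n)%N ->
           (t1 h1 < t1 h2)%N \/ (t2 h1 < t2 h2)%N),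
        (forall k, (k1 < k < n)%N -> mul (e (t1 k)) (e (t2 k)) = e k) &
        Defs.Lspan mul one S 1 = (<< mkseq e k1.+1 >>)%VS].
Proof.
move=> n M n2 [Lfull Lmin] l2 Mk1 Mk2.
have one0 : one != 0%R.
  apply/negP => /eqP o0.
  have f0 : (fullv : {vspace A}) = 0%VS.
    apply/eqP; rewrite -subv0; apply/subvP => x _.
    by rewrite memv0 -(mul1x x) o0 mul0l.
  by move: n2; rewrite /n f0 dimv0.
have [E I] := allInv one0 l.
have hM : M = map em E by rewrite /M (Ipre I).
have spf := span_full I.
have sE : size E = n.
  by move/eqP: (Ifree I); rewrite size_map spf Lfull.
have nthM i : i < n -> nth 0 M i = mE E i.
  by move=> hi; rewrite hM (nth_map d0) // sE.
have m0 : mE E 0 = 0 by rewrite -nthM //; lia.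
have k1n : k1.+1 < n.
  case: (ltnP k1.+1 n) => // h; move: Mk2; rewrite nth_default //.
  by rewrite hM size_map sE.
have mk1 : mE E k1 = 1 by rewrite -nthM //; lia.
have mk2 : 1 < mE E k1.+1 by rewrite -nthM.
have big k : k1 < k < n -> 1 < mE E k.
  move=> /andP[a b].
  apply: (leq_trans mk2); apply: (Imono I); rewrite sE; lia.
have eseq m : m <= n -> mkseq (vE E) m = map ev (take m E).
  move=> mn; apply: (eq_from_nth (x0 := 0%R)).
    by rewrite size_mkseq size_map size_take; case: (ltnP m (size E)) => h; lia.
  move=> i; rewrite size_mkseq => hi.
  rewrite nth_mkseq // (nth_map d0) ?nth_take //.
  rewrite size_take; case: (ltnP m (size E)) => h; lia.
exists (vE E), (t1E E), (t2E E); split.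
  rewrite eseq // -sE take_size /basis_of spf Lfull eqxx.
  exact: (Ifree I).
split.
- move=> i hi; rewrite nthM //; apply: (Iword I); apply: memX; rewrite sE.
  exact: hi.
- move=> k hk; have bk := big k hk.
  have kn : k < size E by rewrite sE; lia.
  have [[a b c d e] _] := Iprod I k kn bk.
  have t1p : 0 < t1E E k.
    by case: (posnP (t1E E k)) c => [->|//]; rewrite m0.
  have t2p : 0 < t2E E k.
    by case: (posnP (t2E E k)) d => [->|//]; rewrite m0.
  rewrite !nthM; try lia.
  split => //; apply/andP; split => //; lia.
- move=> h1 h2 a b c; apply: (Ilex I).
    by rewrite sE; apply/andP; split.
  by apply: big; apply/andP; split => //; lia.
- move=> k hk; have bk := big k hk.
  have kn : k < size E by rewrite sE; lia.
  by have [_ e] := Iprod I k kn bk.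
- rewrite eseq; last by lia.
  rewrite -(Ispan I 1) //; last by lia.
  congr span; congr map.
  rewrite -{1}(cat_take_drop k1.+1 E) filter_cat.
  have -> : filter (fun x => em x <= 1) (drop k1.+1 E) = [::].
    apply/eqP; rewrite -[_ == _]negbK -has_filter -all_predC.
    apply/(all_nthP d0) => i; rewrite size_drop sE => hi.
    rewrite /= nth_drop -ltnNge.
    apply: (leq_trans mk2); apply: (Imono I); rewrite sE; lia.
  rewrite cats0; apply/all_filterP/(all_nthP d0) => i.
  rewrite size_take sE k1n => hi.
  rewrite nth_take //.
  apply: (@leq_trans (mE E k1)); last by rewrite mk1.
  apply: (Imono I); rewrite sE; lia.
Qed.

End Proof.

Theorem proposition5p6 (F : fieldType) (A : vectType F)
  (mul : A -> A -> A) (one : A)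
  (mul_linl : forall y : A, linear (fun x => mul x y))
  (mul_linr : forall x : A, linear (mul x))
  (mul1x : forall x, mul one x = x) (mulx1 : forall x, mul x one = x)
  (S : seq A) (l : nat) (k1 : nat) :
  let n := \dim (fullv : {vspace A}) in
  let M := charseq mul one S l in
  (2 <= n)%N ->
  is_length mul one S l -> (2 <= l)%N ->
  nth 0%N M k1 = 1%N -> (1 < nth 0%N M k1.+1)%N ->
  exists (e : nat -> A) (t1 t2 : nat -> nat),
    basis_of fullv (mkseq e n) /\
    [/\ (* (1) *)
        (forall i, (i < n)%N -> e i \in words mul one S (nth 0%N M i)),
        (* (2a) *)
        (forall k, (k1 < k < n)%N ->
           [/\ (1 <= t1 k <= n.-1)%N, (1 <= t2 k <= n.-1)%N,
               (nth 0%N M (t1 k) + nth 0%N M (t2 k) = nth 0%N M k)%N,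
               (t1 k < k)%N & (t2 k < k)%N]),
        (* (2b) *)
        (forall h1 h2, (k1 < h1)%N -> (h1 < h2)%N -> (h2 < n)%N ->
           (t1 h1 < t1 h2)%N \/ (t2 h1 < t2 h2)%N),
        (* (3) *)
        (forall k, (k1 < k < n)%N -> mul (e (t1 k)) (e (t2 k)) = e k) &
        (* (4) *)
        Lspan mul one S 1 = (<< mkseq e k1.+1 >>)%VS].
Proof.
exact: (@main_sec F A mul one mul_linl mul_linr mul1x mulx1 S l k1).
Qed.
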